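(* Let $l=2^s$ with $s$ an integer and $l>2$, and let $q=l^2$. Then there exists a quantum MDS code with parameters $[[l^2+1,\,l^2-2l+3,\,l]]_q$; in particular, there exists a $q$-ary quantum MDS code of length $l^2+1$ and minimum distance $l$.
   Context: Quantum codes: let $V_n=(\mathbb{C}^q)^{\otimes n}$ with orthonormal basis $\{|\mathbf{c}\rangle:\mathbf{c}\in\mathbb{F}_q^n\}$, $q=p^e$. For $a,b\in\mathbb{F}_q$ define $X(a)|x\rangle=|x+a\rangle$, $Z(b)|x\rangle=\omega^{\mathrm{tr}(bx)}|x\rangle$ with $\omega=e^{2\pi i/p}$ and $\mathrm{tr}:\mathbb{F}_q\to\mathbb{F}_p$ the trace; for $\mathbf{a},\mathbf{b}\in\mathbb{F}_q^n$ let $X(\mathbf{a})=\bigotimes_i X(a_i)$, $Z(\mathbf{b})=\bigotimes_i Z(b_i)$. The error group is $G_n=\{\omega^cX(\mathbf{a})Z(\mathbf{b})\}$, and the weight of $\omega^cX(\mathbf{a})Z(\mathbf{b})$ is the number of $i$ with $(a_i,b_i)\ne(0,0)$. A quantum code with parameters $[[n,k,d]]_q$ is a subspace $Q\subseteq V_n$ of dimension $q^k$ with minimum distance $d$: for all $|u\rangle,|v\rangle\in Q$ with $\langle u|v\rangle=0$ and every $E\in G_n$ of weight at most $d-1$, $\langle u|E|v\rangle=0$ (with the standard purity-based convention when $k=0$). Every $[[n,k,d]]_q$ quantum code satisfies the quantum Singleton bound $2d\le n-k+2$; a code attaining $2d=n-k+2$ is called a quantum MDS code. *)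

(* Defs.v *)
From HB Require Import structures.
From mathcomp Require Import all_boot all_order all_algebra all_field.
Set Implicit Arguments. Unset Strict Implicit. Unset Printing Implicit Defensive.
Import Order.TTheory GRing.Theory Num.Theory.
Local Open Scope ring_scope.

Section QuantumCodes.
Variable F : finFieldType.

(* q = #|F| = p^e, p the characteristic *)
Definition qchar : nat := pdiv #|F|.
Definition qdeg : nat := logn qchar #|F|.

(* absolute trace F_q -> F_p (value lies in the prime subfield of F) *)
Definition ftrace (x : F) : F := \sum_(i < qdeg) x ^+ (qchar ^ i).

Definition ftrace_nat (x : F) : nat :=
  odflt 0%N (omap (@nat_of_ord _) [pick k : 'I_qchar | ftrace x == (k : nat)%:R]).

(* omega = exp(2 pi i / p) = (exp(i pi / p))^2 *)
Definition qomega : algC := (qchar.-root (-1)) ^+ 2.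

(* V_n = (C^q)^{(x) n}: functions on the basis { |c> : c in F^n } *)
Definition qstate (n : nat) := {ffun {ffun 'I_n -> F} -> algC^o}.

Definition qinner n (u v : qstate n) : algC :=
  \sum_(y : {ffun 'I_n -> F}) (u y)^* * v y.

(* action of omega^c X(a) Z(b), where X(a)Z(b)|x> = omega^{tr(b.x)} |x+a>
   (Z(b) = tensor of Z(b_i)). *)
Definition qerr n (c : nat) (a b : {ffun 'I_n -> F}) (v : qstate n) : qstate n :=
  [ffun y : {ffun 'I_n -> F} =>
     qomega ^+ c *
     (\prod_(i < n) qomega ^+ (ftrace_nat (b i * (y i - a i)))) *
     v [ffun i => y i - a i]].

Definition qweight n (a b : {ffun 'I_n -> F}) : nat :=
  #|[set i : 'I_n | (a i != 0) || (b i != 0)]|.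

(* minimum distance d (k > 0 convention) *)
Definition qmin_dist n (Q : {vspace qstate n}) (d : nat) : Prop :=
  forall u v : qstate n, u \in Q -> v \in Q -> qinner u v = 0 ->
  forall (c : nat) (a b : {ffun 'I_n -> F}), (qweight a b <= d.-1)%N ->
  qinner u (qerr c a b v) = 0.

Definition is_qcode n (Q : {vspace qstate n}) (k d : nat) : Prop :=
  \dim Q = (#|F| ^ k)%N /\ qmin_dist Q d.

Definition is_qMDS n (Q : {vspace qstate n}) (k d : nat) : Prop :=
  is_qcode Q k d /\ (2 * d = n - k + 2)%N.

End QuantumCodes.

(* Main.v *)
Require Import Defs.
From HB Require Import structures.
From mathcomp Require Import all_boot all_order all_algebra all_field.
From mathcomp Require Import mxabelem.
From mathcomp Require Import zify ring.
Set Implicit Arguments. Unset Strict Implicit. Unset Printing Implicit Defensive.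
Import Order.TTheory GRing.Theory Num.Theory.
Local Open Scope ring_scope.

Section QA.
Variable F : finFieldType.
Variables n m : nat.
Variable G : 'M[F]_(m, n).
Hypothesis hGG : G *m G^T = 0.
Hypothesis hfree : row_free G.
Hypothesis hdist : forall x : 'rV[F]_n, x *m G^T = 0 ->
   (#|[set i | x ord0 i != 0%R]| <= m)%N -> x = 0.
Notation sg := (fun x : F => qomega F ^+ ftrace_nat x).
Hypothesis hsgD : forall x y, sg (x + y) = sg x * sg y.
Hypothesis hsg0 : sg 0 = 1.
Hypothesis hc0 : exists c0, sg c0 = -1.

Definition rv (y : {ffun 'I_n -> F}) : 'rV[F]_n := \row_i y i.
Definition fv (x : 'rV[F]_n) : {ffun 'I_n -> F} := [ffun i => x ord0 i].

Lemma rvK x : rv (fv x) = x.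
Proof. by apply/rowP => i; rewrite !mxE ffunE. Qed.
Lemma rvD y z : rv (y + z) = rv y + rv z.
Proof. by apply/rowP => i; rewrite !mxE ffunE. Qed.

Lemma subG_K (x : 'rV_n) : (x <= G)%MS -> x *m G^T = 0.
Proof. by case/submxP => D ->; rewrite -mulmxA hGG mulmx0. Qed.

Lemma subN (x : 'rV_n) : (x <= G)%MS -> (- x <= G)%MS.
Proof. by case/submxP => D ->; rewrite -mulNmx submxMl. Qed.

Lemma addsubG (x y : 'rV_n) : (y <= G)%MS -> ((x + y)%R <= G)%MS = (x <= G)%MS.
Proof.
move=> hy; apply/idP/idP => h; last by apply: addmx_sub.
have -> : x = (x + y) + (- y) by rewrite addrK.
exact: (addmx_sub h (subN hy)).
Qed.

Definition KT := kermx G^T.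
Definition W := (KT :\: G)%MS.

Lemma GsubK : (G <= KT)%MS.
Proof. by rewrite /KT sub_kermx hGG. Qed.

Lemma rankW : \rank W = (n - 2 * m)%N.
Proof.
have h := mxrank_cap_compl KT G.
have e1 : \rank (KT :&: G)%MS = m.
  by rewrite (capmx_idPr GsubK); apply/eqP.
have e2 : \rank KT = (n - m)%N.
  by rewrite /KT mxrank_ker mxrank_tr (eqP hfree).
rewrite /W; lia.
Qed.

Definition psi (w : 'rV[F]_n) : qstate F n :=
  [ffun y => ((rv y - w)%R <= G)%MS%:R].

Definition Xs := [seq psi w | w <- enum (@rowg F n n W)].
Definition Q : {vspace qstate F n} := span Xs.

Lemma W_K (w : 'rV[F]_n) : (w <= W)%MS -> w *m G^T = 0.
Proof.
move=> hw; apply/eqP; rewrite -sub_kermx -/KT.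
exact: submx_trans hw (diffmxSl _ _).
Qed.

Lemma psi_supp (w : 'rV[F]_n) y : (w <= W)%MS -> psi w y != 0 -> rv y *m G^T = 0.
Proof.
move=> hw; rewrite ffunE.
have [h|h] := boolP ((rv y - w)%R <= G)%MS; last by rewrite eqxx.
move=> _; have := subG_K h; rewrite mulmxBl (W_K hw) subr0 //.
Qed.

Lemma psi_inv w y z : (rv z <= G)%MS -> psi w (y + z) = psi w y.
Proof.
by move=> hz; rewrite !ffunE rvD addrAC addsubG.
Qed.

Lemma psi_diag (w1 w2 : 'rV[F]_n) : (w1 <= W)%MS -> (w2 <= W)%MS ->
  psi w1 (fv w2) = (w1 == w2)%:R.
Proof.
move=> h1 h2; rewrite ffunE rvK.
have [->|ne] := eqVneq w1 w2; first by rewrite subrr sub0mx.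
suff -> : ((w2 - w1)%R <= G)%MS = false by [].
apply/negP => h.
have : ((w2 - w1)%R <= W :&: G)%MS.
  by rewrite sub_capmx h andbT; apply: addmx_sub => //; rewrite (eqmx_opp w1).
rewrite capmx_diff submx0 subr_eq0 => /eqP e.
by rewrite e eqxx in ne.
Qed.

Lemma freeXs : free Xs.
Proof.
rewrite -[Xs]in_tupleE; apply/freeP => k hk i.
set e := enum (rowg W).
have He j : (j < size e)%N -> (nth 0 e j <= W)%MS.
  by move=> hj; rewrite -mem_rowg -mem_enum mem_nth.
have hi : (i < size e)%N by rewrite -(size_map psi) ltn_ord.
have := congr1 (fun f : qstate F n => f (fv (nth 0 e i))) hk.
rewrite sum_ffunE ffunE /= (bigD1 i) //= big1 ?addr0.
  by rewrite ffunE (nth_map 0) // psi_diag ?He // eqxx /= -[_ *: _]/(_ * _) mulr1.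
move=> j hj; rewrite ffunE (nth_map 0) //.
rewrite psi_diag ?He //; last by rewrite -(size_map psi) ltn_ord.
rewrite nth_uniq ?enum_uniq //; last by rewrite -(size_map psi) ltn_ord.
rewrite (_ : (j == i :> nat) = false); last exact: negbTE hj.
by rewrite -[_ *: _]/(_ * _) mulr0.
by rewrite -(size_map psi) ltn_ord.
Qed.

Lemma dimQ : \dim Q = (#|F| ^ (n - 2 * m))%N.
Proof.
by rewrite /Q (eqP freeXs) size_map -cardE card_rowg rankW.
Qed.

Lemma Xs_nth i : (i < size Xs)%N ->
  Xs`_i = psi (enum (rowg W))`_i /\ ((enum (rowg W))`_i <= W)%MS.
Proof.
rewrite size_map => hi; rewrite (nth_map 0) //; split => //.
by rewrite -mem_rowg -mem_enum mem_nth.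
Qed.

Lemma Q_supp u y : u \in Q -> rv y *m G^T != 0 -> u y = 0.
Proof.
move=> hu hy; have hu' : u \in span (in_tuple Xs) by [].
rewrite (coord_span hu') sum_ffunE big1 // => i _.
rewrite ffunE; have [-> hw] := Xs_nth (ltn_ord i).
have [h|h] := eqVneq (psi (enum (rowg W))`_i y) 0.
  by rewrite h scaler0.
by rewrite (psi_supp hw h) eqxx in hy.
Qed.

Lemma Q_inv u y z : u \in Q -> (rv z <= G)%MS -> u (y + z) = u y.
Proof.
move=> hu hz; have hu' : u \in span (in_tuple Xs) by [].
rewrite (coord_span hu') !sum_ffunE; apply: eq_bigr => i _.
rewrite !ffunE; have [-> hw] := Xs_nth (ltn_ord i).
by rewrite psi_inv.
Qed.


Lemma Q_KL : qmin_dist Q m.+1.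
Proof.
move=> u v hu hv huv c a b hw; rewrite /= in hw.
have wa : (#|[set i | rv a ord0 i != 0%R]| <= m)%N.
  apply: leq_trans hw; apply: subset_leq_card; apply/subsetP => i.
  by rewrite !inE mxE => ->.
have wb : (#|[set i | rv b ord0 i != 0%R]| <= m)%N.
  apply: leq_trans hw; apply: subset_leq_card; apply/subsetP => i.
  by rewrite !inE mxE => ->; rewrite orbT.
have e0 : forall i, (0 : {ffun 'I_n -> F}) i = 0 by move=> i; rewrite ffunE.
have rv0 : forall x, rv x = 0 -> x = 0.
  move=> x hx; apply/ffunP => i; move/rowP/(_ i): hx; rewrite !mxE => ->.
  by rewrite e0.
rewrite /qinner.
have [a0|anz] := eqVneq a 0.
  subst a.
  have ey : forall y : {ffun 'I_n -> F}, [ffun i => y i - (0 : {ffun 'I_n -> F}) i] = y.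
    by move=> y; apply/ffunP => i; rewrite !ffunE ?e0 subr0.
  have chi : forall y, \prod_i qomega F ^+ ftrace_nat (b i * (y i - (0 : {ffun 'I_n -> F}) i))
      = sg (\sum_i b i * y i).
    move=> y; rewrite (big_morph sg hsgD hsg0); apply: eq_bigr => i _.
    by rewrite ?e0 subr0.
  have [b0|bnz] := eqVneq b 0.
    subst b.
    transitivity (qomega F ^+ c * \sum_y (u y)^* * v y); last by rewrite -/(qinner u v) huv mulr0.
    rewrite mulr_sumr; apply: eq_bigr => y _; rewrite ffunE ey chi big1.
      by rewrite hsg0 mulr1 mulrCA.
    by move=> i _; rewrite ?e0 mul0r.
  have hK : rv b *m G^T != 0.
    by apply/eqP => h; move/rv0: (hdist h wb) => b0; rewrite b0 eqxx in bnz.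
  case: (pickP (fun j => (rv b *m G^T) ord0 j != 0)) => [j hj | hnone]; last first.
    case/eqP: hK; apply/rowP => j; rewrite [RHS]mxE.
    by have := hnone j; rewrite /= => /negbFE/eqP.
  have [c0 hc0'] := hc0.
  set t := (rv b *m G^T) ord0 j in hj.
  have et : t = \sum_i b i * G j i.
    by rewrite /t mxE; apply: eq_bigr => i _; rewrite !mxE.
  pose z := fv ((c0 / t) *: row j G).
  have hz : (rv z <= G)%MS by rewrite rvK scalemx_sub // row_sub.
  have hbz : \sum_i b i * z i = c0.
    transitivity (c0 / t * t); last by rewrite divfK.
    rewrite et mulr_sumr; apply: eq_bigr => i _.
    by rewrite ffunE !mxE -et mulrCA.
  set S := (X in X = 0).
  have eS : S = \sum_y (u y)^* * (qomega F ^+ c * sg (\sum_i b i * y i) * v y).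
    by apply: eq_bigr => y _; rewrite ffunE ey chi.
  have : S = - S.
    rewrite {1}eS (reindex_inj (addIr z)) eS -sumrN; apply: eq_bigr => y _ /=.
    rewrite (Q_inv _ hu hz) (Q_inv _ hv hz).
    rewrite (_ : \sum_i b i * (y + z) i = \sum_i b i * y i + c0).
      by rewrite hsgD hc0' mulrN1 mulrN mulNr mulrN.
    rewrite -hbz -big_split; apply: eq_bigr => i _; rewrite ffunE mulrDr //.
  move/eqP; rewrite -addr_eq0 -mulr2n mulrn_eq0 /= => /eqP //.
have haK : rv a *m G^T != 0.
  by apply/eqP => h; move/rv0: (hdist h wa) => a0; rewrite a0 eqxx in anz.
apply: big1 => y _; rewrite ffunE.
have [hy|hy] := eqVneq (rv y *m G^T) 0; last by rewrite (Q_supp hu hy) conjC0 mul0r.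
rewrite (Q_supp (y := [ffun i => y i - a i]) hv) ?mulr0 //.
apply: contra haK => /eqP h.
have -> : rv a = rv y - rv [ffun i => y i - a i].
  by apply/rowP => i; rewrite !mxE ffunE opprB addrC subrK.
by rewrite mulmxBl hy h subrr.
Qed.

End QA.

Section Trace.
Variable F : finFieldType.
Variable s : nat.
Hypothesis hs : (0 < s)%N.
Hypothesis hF : #|F| = (2 ^ (2 * s))%N.

Lemma char2 : (2%:R : F) = 0.
Proof.
have h : (2 \in [pchar F])%N by apply: (card_finPcharP hF).
exact: pcharf0 h.
Qed.

Lemma oppF (x : F) : - x = x.
Proof. by apply/eqP; rewrite eq_sym -subr_eq0 opprK -mulr2n -mulr_natr char2 mulr0. Qed.

Lemma addxx (x : F) : x + x = 0.
Proof. by rewrite -mulr2n -mulr_natr char2 mulr0. Qed.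

Lemma qcharE : qchar F = 2%N.
Proof.
rewrite /qchar hF; have -> : (2 * s = (2 * s).-1.+1)%N by lia.
by rewrite pdiv_pfactor.
Qed.

Lemma qdegE : qdeg F = (2 * s)%N.
Proof. by rewrite /qdeg qcharE hF pfactorK. Qed.

Lemma frobD (x y : F) i : (x + y) ^+ (2 ^ i) = x ^+ (2 ^ i) + y ^+ (2 ^ i).
Proof.
elim: i => [|i IH]; first by rewrite !expr1.
rewrite expnS mulnC !exprM IH sqrrD.
by rewrite -mulr_natr char2 mulr0 addr0.
Qed.

Lemma ftraceE (x : F) : ftrace x = \sum_(i < 2 * s) x ^+ (2 ^ i).
Proof. by rewrite /ftrace qcharE qdegE. Qed.

Lemma ftraceD (x y : F) : ftrace (x + y) = ftrace x + ftrace y.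
Proof.
by rewrite !ftraceE -big_split; apply: eq_bigr => i _; rewrite frobD.
Qed.

Lemma ftrace0 : ftrace (0 : F) = 0.
Proof.
by rewrite ftraceE big1 // => i _; rewrite expr0n expn_eq0.
Qed.

Lemma sq_sum (I : finType) (f : I -> F) :
  (\sum_i f i) ^+ 2 = \sum_i f i ^+ 2.
Proof.
apply: (big_morph (fun t : F => t ^+ 2)).
  by move=> a b; rewrite (frobD a b 1).
by rewrite expr0n.
Qed.

Lemma ftrace_sq (x : F) : ftrace (x ^+ 2) = ftrace x ^+ 2.
Proof.
rewrite !ftraceE sq_sum; apply: eq_bigr => i _.
by rewrite -!exprM mulnC.
Qed.

Lemma ftrace_idem (x : F) : ftrace x ^+ 2 = ftrace x.
Proof.
rewrite !ftraceE sq_sum.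
have e : (2 * s = (2 * s).-1.+1)%N by lia.
rewrite e big_ord_recr [RHS]big_ord_recl /= addrC; congr (_ + _).
  rewrite -exprM -expnSr -e -hF expf_card expn0 expr1 //.
by apply: eq_bigr => i _; rewrite -exprM /bump /= expnS mulnC.
Qed.

Lemma ftrace01 (x : F) : ftrace x = 0 \/ ftrace x = 1.
Proof.
have := ftrace_idem x; set t := ftrace x => ht.
have : t * (t - 1) == 0 by rewrite mulrBr mulr1 -expr2 ht subrr.
rewrite mulf_eq0 subr_eq0 => /orP [/eqP -> | /eqP ->]; by [left|right].
Qed.

Lemma ftrace_fix (y : F) : y ^+ (2 ^ s) = y -> ftrace y = 0.
Proof.
move=> hy; rewrite ftraceE.
have -> : (2 * s = s + s)%N by lia.
rewrite big_split_ord /=.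
rewrite [X in _ + X](eq_bigr (fun i : 'I_s => y ^+ (2 ^ i))); first exact: addxx.
move=> i _; rewrite /= expnD exprM hy //.
Qed.

Lemma ftrace_sqadd (x : F) : ftrace (x ^+ 2 + x) = 0.
Proof. by rewrite ftraceD ftrace_sq ftrace_idem addxx. Qed.

Lemma ftrace_surj : exists c0 : F, ftrace c0 = 1.
Proof.
have [hx|] := boolP [forall x : F, ftrace x == 0]; last first.
  rewrite negb_forall => /existsP [x hx]; exists x.
  by case: (ftrace01 x) => // h; rewrite h eqxx in hx.
pose P : {poly F} := \sum_(i < 2 * s) 'X^(2 ^ i).
have hP : P = 0.
  apply: (roots_geq_poly_eq0 (rs := enum F)).
  - apply/allP => x _; rewrite /root /P horner_sum.
    rewrite (eq_bigr (fun i : 'I_(2*s) => x ^+ (2 ^ i))); last by move=> i _; rewrite hornerXn.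
    by rewrite -ftraceE; exact: (forallP hx x).
  - exact: enum_uniq.
  - rewrite -cardE hF; apply: leq_trans (size_sum _ _ _) _.
    apply/bigmax_leqP => i _; rewrite size_polyXn.
    have hi : (i <= (2 * s).-1)%N by have := ltn_ord i; lia.
    have h1 : (2 ^ i <= 2 ^ (2 * s).-1)%N by rewrite leq_exp2l.
    have h2 : (2 ^ (2 * s) = 2 * 2 ^ (2 * s).-1)%N.
      by rewrite -expnS; have -> : (2 * s = (2 * s).-1.+1)%N by lia.
    have : (0 < 2 ^ (2 * s).-1)%N by rewrite expn_gt0.
    lia.
have := congr1 (fun p : {poly F} => p`_(2 ^ (2 * s).-1)) hP.
rewrite coef0 /P coef_sum.
have e : (2 * s = (2 * s).-1.+1)%N by lia.
have hlt : ((2 * s).-1 < 2 * s)%N by lia.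
rewrite (bigD1 (Ordinal hlt)) //=.
rewrite coefXn eqxx big1 ?addr0; first by move/eqP; rewrite oner_eq0.
move=> i hi; rewrite coefXn eqn_exp2l //.
by rewrite (_ : ((2 * s).-1 == i) = false); last by apply/eqP => h; case/eqP: hi; apply: val_inj.
Qed.

Lemma qomegaE : qomega F = -1.
Proof. by rewrite /qomega qcharE rootCK. Qed.

Lemma ftrace_natE (x : F) : ftrace_nat x = (ftrace x == 1) :> nat.
Proof.
rewrite /ftrace_nat; case: pickP => [k hk | hnone] /=.
  have hk2 : (k < 2)%N by rewrite -qcharE ltn_ord.
  move/eqP: hk; move: hk2; case: k => [k' hk'] /= hk2 hk.
  have h10 : (1 : F) != 0 by rewrite oner_eq0.
  have h01 : ((0 : F) == 1) = false by rewrite eq_sym oner_eq0.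
  have [e|e] : k' = 0%N \/ k' = 1%N by lia.
    subst k'; case: (ftrace01 x) => h; rewrite h in hk *.
      by rewrite h01.
    by rewrite hk eqxx in h10.
  subst k'; case: (ftrace01 x) => h; rewrite h in hk *; last by rewrite eqxx.
  by rewrite hk eqxx in h10.
exfalso.
have q2 : (1 < qchar F)%N by rewrite qcharE.
case: (ftrace01 x) => h.
  by have := hnone (Ordinal (ltnW q2)); rewrite /= h eqxx.
by have := hnone (Ordinal q2); rewrite /= h eqxx.
Qed.

Lemma sgD (x y : F) : qomega F ^+ ftrace_nat (x + y) =
   qomega F ^+ ftrace_nat x * qomega F ^+ ftrace_nat y.
Proof.
rewrite !ftrace_natE ftraceD qomegaE.
have h10 : (1 : F) != 0 by rewrite oner_eq0.
have h01 : ((0 : F) == 1) = false by rewrite eq_sym oner_eq0.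
case: (ftrace01 x) => ->; case: (ftrace01 y) => ->;
  rewrite ?addr0 ?add0r ?addxx ?eqxx ?h01 /= ?expr0 ?expr1 ?mulr1 ?mul1r ?mulrNN //.
all: by rewrite mulr1.
Qed.

Lemma sg0 : qomega F ^+ ftrace_nat (0 : F) = 1.
Proof. by rewrite ftrace_natE ftrace0 eq_sym oner_eq0. Qed.

Lemma sgc0 : exists c0 : F, qomega F ^+ ftrace_nat c0 = -1.
Proof.
by have [c0 h] := ftrace_surj; exists c0; rewrite ftrace_natE h eqxx qomegaE expr1.
Qed.

End Trace.

Section PowSum.
Variable F : finFieldType.
Hypothesis hq0 : (#|F|%:R : F) = 0.
Local Notation q := #|F|.

Lemma q_gt1 : (1 < q)%N.
Proof. exact: finNzRing_gt1. Qed.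

Lemma expq1 (a : F) : a != 0 -> a ^+ q.-1 = 1.
Proof.
move=> ha; have := expf_card a.
rewrite -(prednK (ltnW q_gt1)) exprS => h.
apply: (mulfI ha); by rewrite mulr1.
Qed.

Lemma powsum i : (i < q)%N ->
  \sum_(a : F) a ^+ i = - (i == q.-1)%:R.
Proof.
move=> hi.
have [i0|ipos] := eqVneq i 0%N.
  subst i; rewrite (eq_bigr (fun _ => 1)) ?sumr_const; last by move=> a _; rewrite expr0.
  rewrite -[1 *+ _]/(_%:R) (_ : #|[pred a : F | true]| = q) ?hq0; last by apply: eq_card.
  have -> : (0 == q.-1)%N = false by have := q_gt1; lia.
  by rewrite oppr0.
have [iq|inq] := eqVneq i q.-1.
  subst i; rewrite /=.
  rewrite (eq_bigr (fun a : F => if a != 0 then 1 else 0)); last first.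
    move=> a _; have [->|ha] := eqVneq a 0; last by rewrite expq1.
    by rewrite expr0n; have := q_gt1; case: q => // [[|k]].
  rewrite -big_mkcond /= sumr_const cardC1 -[1 *+ _]/(_%:R).
  have h := hq0; rewrite -(prednK (ltnW q_gt1)) -addn1 natrD in h.
  by apply/eqP; rewrite -subr_eq0 opprK h.
rewrite /= oppr0.
have [a0 [a0nz a0i]] : exists a0 : F, a0 != 0 /\ a0 ^+ i != 1.
  have [h|] := boolP [forall a : F, (a != 0) ==> (a ^+ i == 1)]; last first.
    rewrite negb_forall => /existsP [a]; rewrite negb_imply => /andP [h1 h2].
    by exists a.
  exfalso.
  have hP : ('X^i - 1 : {poly F}) = 0.
    apply: (roots_geq_poly_eq0 (rs := enum [pred a : F | a != 0])).
    - apply/allP => a; rewrite mem_enum inE => ha.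
      by rewrite rootE !hornerE subr_eq0; move/forallP/(_ a): h; rewrite ha.
    - exact: enum_uniq.
    - rewrite -cardE cardC1 size_Xn_sub_1; first by rewrite ltn_neqAle inq /= -ltnS (ltn_predK q_gt1).
      by rewrite lt0n.
  by have := congr1 (fun p : {poly F} => size p) hP; rewrite /= size_Xn_sub_1 ?lt0n // size_poly0.
set S := \sum_a _.
have : S = a0 ^+ i * S.
  rewrite {1}/S (reindex_inj (mulfI a0nz)) /S mulr_sumr.
  by apply: eq_bigr => a _; rewrite exprMn.
move/eqP; rewrite -subr_eq0 -{1}(mul1r S) -mulrBl mulf_eq0 subr_eq0 eq_sym (negbTE a0i) /=.
by move/eqP.
Qed.

Lemma sum_horner (p : {poly F}) : (size p <= q)%N ->
  \sum_(a : F) p.[a] = - p`_q.-1.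
Proof.
move=> hp.
rewrite (eq_bigr (fun a => \sum_(i < q) p`_i * a ^+ i)); last by move=> a _; apply: horner_coef_wide.
rewrite exchange_big /=.
rewrite (eq_bigr (fun i : 'I_q => p`_i * - (i == q.-1 :> nat)%:R)); last first.
  by move=> i _; rewrite -mulr_sumr powsum.
have hq : (q.-1 < q)%N by have := q_gt1; lia.
rewrite (bigD1 (Ordinal hq)) //= eqxx big1 ?addr0 ?mulrN1 //.
move=> i hi; rewrite (_ : (i == q.-1 :> nat) = false) ?oppr0 ?mulr0 //.
by apply/eqP => h; case/eqP: hi; apply: val_inj.
Qed.

End PowSum.

Lemma sum_alpha (F : finFieldType) (f : F -> F) :
  \sum_(i < #|F|) f (nth 0 (enum F) i) = \sum_a f a.
Proof.
have := big_nth 0 (op := +%R) (idx := 0) (r := enum F) xpredT f.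
rewrite big_mkord => h.
by rewrite cardE -h enumT.
Qed.

Lemma sum_alphaq (F : finFieldType) q (hq : #|F| = q) (f : F -> F) :
  \sum_(i < q) f (nth 0 (enum F) i) = \sum_a f a.
Proof. by subst q; apply: sum_alpha. Qed.

Section Code.
Variable F : finFieldType.
Hypothesis hq0 : (#|F|%:R : F) = 0.
Variable q : nat.
Hypothesis hq : #|F| = q.
Variable m : nat.
Hypothesis hm : (0 < m)%N.
Hypothesis hmq : (m <= q)%N.
Variable R : {poly F}.
Hypothesis hRmon : R \is monic.
Hypothesis hRsize : (size R + 2 * m = q + 2)%N.
Variable w : F -> F.
Hypothesis hw2 : forall a, w a ^+ 2 = R.[a].
Hypothesis hwnz : forall a, w a != 0.

Definition alpha (i : nat) : F := nth 0 (enum F) i.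

Definition Gm : 'M[F]_(m, q.+1) :=
  \matrix_(j < m, i < q.+1)
    if (i < q)%N then w (alpha i) * alpha i ^+ j else (j == m.-1 :> nat)%:R.

Lemma GGT : Gm *m Gm^T = 0.
Proof.
apply/matrixP => j k; rewrite !mxE big_ord_recr /=.
rewrite (eq_bigr (fun i : 'I_q => (R * 'X^(j + k)).[alpha i])); last first.
  move=> i _; rewrite !mxE /= ltn_ord hornerM hornerXn -hw2 exprD.
  by rewrite expr2; ring.
rewrite /alpha (sum_alphaq hq (fun a => (R * 'X^(j + k)).[a])) sum_horner //; last first.
  have hj := ltn_ord j; have hk := ltn_ord k.
  have [->|Rnz] := eqVneq R 0; first by rewrite mul0r size_poly0.
  rewrite hq size_mulXn //; lia.
rewrite hq !mxE /= ltnn coefMXn.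
have hj := ltn_ord j; have hk := ltn_ord k.
have hlead : R`_(size R).-1 = 1 by have := monicP hRmon; rewrite lead_coefE.
have hR1 : (0 < size R)%N by rewrite size_poly_gt0 monic_neq0.
have sRE : size R = (q + 2 - 2 * m)%N by lia.
rewrite sRE in hR1.
have [ej|ej] := eqVneq (j : nat) m.-1; have [ek|ek] := eqVneq (k : nat) m.-1;
  rewrite /=;
  [have ej' : (j : nat) = m.-1 := ej | have ej' : (j : nat) = m.-1 := ej
  | have ej' : (j : nat) <> m.-1 by apply/eqP | have ej' : (j : nat) <> m.-1 by apply/eqP];
  [have ek' : (k : nat) = m.-1 := ek | have ek' : (k : nat) <> m.-1 by apply/eqP
  | have ek' : (k : nat) = m.-1 := ek | have ek' : (k : nat) <> m.-1 by apply/eqP].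
- rewrite ifF; last by lia.
  rewrite (_ : (q.-1 - (j + k))%N = (size R).-1) ?hlead; last by rewrite sRE; lia.
  by rewrite /= mulr1 addNr.
- rewrite /= ?mulr0 ?mul0r addr0.
  case: ltnP => hc; first by rewrite oppr0.
  by rewrite nth_default ?oppr0 // sRE; lia.
- rewrite /= ?mulr0 ?mul0r addr0.
  case: ltnP => hc; first by rewrite oppr0.
  by rewrite nth_default ?oppr0 // sRE; lia.
- rewrite /= ?mulr0 ?mul0r addr0.
  case: ltnP => hc; first by rewrite oppr0.
  by rewrite nth_default ?oppr0 // sRE; lia.
Qed.


Lemma size_enumF : size (enum F) = q.
Proof. by rewrite -cardE hq. Qed.

Lemma alpha_inj (i j : nat) : (i < q)%N -> (j < q)%N -> alpha i = alpha j -> i = j.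
Proof.
move=> hi hj e; apply/eqP; rewrite -(nth_uniq 0 (s := enum F)) ?size_enumF //.
  by rewrite -/(alpha i) -/(alpha j) e.
exact: enum_uniq.
Qed.

Lemma alpha_surj (a : F) : exists2 i, (i < q)%N & alpha i = a.
Proof.
exists (index a (enum F)); first by rewrite -size_enumF index_mem mem_enum.
by rewrite /alpha nth_index ?mem_enum.
Qed.

Lemma Gm_row (p : {poly F}) (hp : (size p <= m)%N) (i : 'I_q.+1) :
  ((\row_(j < m) p`_j) *m Gm) ord0 i =
  if (i < q)%N then w (alpha i) * p.[alpha i] else p`_(m.-1).
Proof.
rewrite !mxE; case: ifP => hi.
  rewrite (horner_coef_wide _ hp) mulr_sumr; apply: eq_bigr => j _.
  by rewrite !mxE hi mulrCA.
have hm1 : (m.-1 < m)%N by lia.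
rewrite (bigD1 (Ordinal hm1)) //= big1 ?addr0.
  by rewrite !mxE hi eqxx mulr1.
move=> j hj; rewrite !mxE hi.
rewrite (_ : (j == m.-1 :> nat) = false) ?mulr0 //.
by apply/eqP => e; case/eqP: hj; apply: val_inj.
Qed.

Lemma Gm_free : row_free Gm.
Proof.
apply: inj_row_free => v hv.
pose p : {poly F} := rVpoly v.
have hp : (size p <= m)%N by apply: size_poly.
have ev : v = \row_(j < m) p`_j.
  by apply/rowP => j; rewrite !mxE coef_rVpoly_ord.
have p0 : p = 0.
  apply: (roots_geq_poly_eq0 (rs := enum F)); last 2 first.
  - exact: enum_uniq.
  - by rewrite size_enumF; apply: leq_trans hp hmq.
  apply/allP => a _; have [i hi <-] := alpha_surj a.
  have := congr1 (fun M : 'rV_q.+1 => M ord0 (Ordinal (leqW hi))) hv.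
  rewrite /= {1}ev Gm_row // hi mxE => /eqP.
  by rewrite mulf_eq0 (negbTE (hwnz _)).
by rewrite ev; apply/rowP => j; rewrite !mxE p0 coef0.
Qed.


Lemma sep_poly (S : {set 'I_q.+1}) (i0 : 'I_q.+1) :
  i0 \in S -> (#|S| <= m)%N ->
  exists p : {poly F}, [/\ (size p <= m)%N,
    ((\row_(j < m) p`_j) *m Gm) ord0 i0 != 0 &
    forall i, i \in S -> i != i0 -> ((\row_(j < m) p`_j) *m Gm) ord0 i = 0].
Proof.
move=> i0S hS.
pose rs := [seq alpha i | i : 'I_q.+1 <- enum (S :\ i0) & (i < q)%N].
pose p0 : {poly F} := \prod_(a <- rs) ('X - a%:P).
have sp0 : size p0 = (size rs).+1 by rewrite /p0 (size_prod_XsubC _ id).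
have cS : #|S| = #|S :\ i0|.+1 by rewrite (cardsD1 i0 S) i0S.
have srs : (size rs <= #|S :\ i0|)%N.
  by rewrite size_map size_filter cardE count_size.
have rootp0 : forall i : 'I_q.+1, i \in S -> i != i0 -> (i < q)%N -> p0.[alpha i] = 0.
  move=> i iS ii0 iq; apply/eqP; rewrite -rootE /p0 root_prod_XsubC.
  by apply/mapP; exists i => //; rewrite mem_filter iq mem_enum !inE ii0 iS.
have p0mon : p0 \is monic by apply: monic_prod_XsubC.
have [hi0|hi0] := boolP (i0 < q)%N.
  exists p0; split.
  - by rewrite sp0; lia.
  - rewrite Gm_row; last by rewrite sp0; lia.
    rewrite hi0 mulf_neq0 ?hwnz //.
    rewrite -rootE /p0 root_prod_XsubC; apply/mapP => [[i]].
    rewrite mem_filter mem_enum !inE => /andP [iq /andP [ii0 iS]] e.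
    have := alpha_inj hi0 iq e => e'.
    by case/eqP: ii0; apply: val_inj.
  - move=> i iS ii0; rewrite Gm_row; last by rewrite sp0; lia.
    case: ifP => iq; first by rewrite rootp0 // mulr0.
    apply: nth_default; rewrite sp0.
    have : (size rs < #|S :\ i0|)%N.
      rewrite size_map size_filter cardE -(count_predC (fun i : 'I_q.+1 => (i < q)%N)).
      rewrite -addn1 leq_add2l -has_count; apply/hasP; exists i.
        by rewrite mem_enum !inE ii0 iS.
      by rewrite /= iq.
    lia.
pose k := (m - size p0)%N.
have p0nz : p0 != 0 by apply: monic_neq0.
exists (p0 * 'X^k); split.
- by rewrite size_mulXn //; rewrite /k sp0; lia.
- rewrite Gm_row; last by rewrite size_mulXn // /k sp0; lia.
  rewrite (negbTE hi0).
  have -> : m.-1 = (size (p0 * 'X^k)).-1 by rewrite size_mulXn // /k sp0; lia.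
  by rewrite -lead_coefE lead_coef_Mmonic ?monicXn // (monicP p0mon) oner_eq0.
- move=> i iS ii0; rewrite Gm_row; last by rewrite size_mulXn // /k sp0; lia.
  have iq : (i < q)%N.
    have := ltn_ord i; have := ltn_ord i0; rewrite ltnS.
    move=> h0 h1; rewrite ltn_neqAle -ltnS h1 andbT.
    apply: contra ii0 => /eqP e; apply/eqP; apply: val_inj => /=; lia.
  by rewrite iq hornerM rootp0 // mul0r mulr0.
Qed.

Lemma Gm_dist (x : 'rV[F]_q.+1) : x *m Gm^T = 0 ->
  (#|[set i | x ord0 i != 0%R]| <= m)%N -> x = 0.
Proof.
move=> hx hS; apply/rowP => i0; rewrite [RHS]mxE; apply/eqP; apply: contraT => hi0.
have i0S : i0 \in [set i | x ord0 i != 0] by rewrite inE.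
have [p [hp hd0 hd]] := sep_poly i0S hS.
set d := (\row_(j < m) p`_j) *m Gm in hd0 hd.
have : (x *m d^T) ord0 ord0 = 0 by rewrite /d trmx_mul mulmxA hx mul0mx mxE.
rewrite mxE (bigD1 i0) //= big1 ?addr0.
  by move/eqP; rewrite mxE mulf_eq0 (negbTE hi0) (negbTE hd0).
move=> i ii0; rewrite mxE.
have [xi|xi] := eqVneq (x ord0 i) 0; first by rewrite xi mul0r.
by rewrite hd ?mulr0 // inE.
Qed.

End Code.


Lemma main_aux (s l : nat) (F : finFieldType) :
  l = (2 ^ s)%N -> (2 < l)%N -> #|F| = (l ^ 2)%N ->
  exists Q : {vspace qstate F (l ^ 2 + 1)%N},
    is_qMDS Q (l ^ 2 + 3 - 2 * l)%N l.
Proof.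
move=> hl hl2 hF.
have hs : (1 < s)%N.
  case: s hl => [|[|s']] hl; rewrite hl in hl2 => //.
have hs0 : (0 < s)%N by lia.
have hF2 : #|F| = (2 ^ (2 * s))%N by rewrite hF hl -expnM mulnC.
have hq0 : (#|F|%:R : F) = 0 by rewrite hF2 natrX (char2 hF2) expr0n; case: (s) hs0.
have [c0 hc0] := ftrace_surj hs0 hF2.
pose t := (2 ^ s.-1)%N.
have hlt : l = (2 * t)%N by rewrite hl /t -expnS prednK.
have ht : (2 <= t)%N by lia.
pose e := ((l - 1) * (t - 1))%N.
pose lin : {poly F} := 'X^(l + 1) + c0%:P.
pose quad : {poly F} := 'X^2 + ('X + c0%:P).
pose R := lin * quad ^+ e.
have linmon : lin \is monic by apply: monicXnaddC; lia.
have quadmon : quad \is monic.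
  by rewrite monicE /quad lead_coefDl ?lead_coefXn // size_polyXn size_XaddC.
have Rmon : R \is monic by rewrite /R monicMl // monic_exp.
have slin : size lin = (l + 2)%N by rewrite /lin size_XnaddC; lia.
have squad : size quad = 3%N by rewrite /quad size_polyDl size_polyXn // size_XaddC.
have squade : size (quad ^+ e) = (2 * e).+1.
  have h := size_exp quad e; rewrite squad in h.
  have h1 : (0 < size (quad ^+ e))%N by rewrite size_poly_gt0 monic_neq0 // monic_exp.
  by rewrite -(prednK h1) h.
have sR : size R = (l + 2 + 2 * e)%N.
  rewrite /R size_monicM // ?monic_neq0 ?monic_exp // slin squade; lia.
set m := (l - 1)%N.
have hRsize : (size R + 2 * m = l ^ 2 + 2)%N.
  rewrite sR /m /e hlt; nia.
have fix_tr : forall y : F, y ^+ (2 ^ s) = y -> ftrace y = 0 := ftrace_fix hs0 hF2.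
have Rnz : forall a : F, R.[a] != 0.
  move=> a; rewrite /R hornerM horner_exp mulf_eq0 negb_or expf_eq0 negb_and.
  apply/andP; split.
    rewrite /lin !hornerE; apply/eqP => h.
    have hc : c0 = a ^+ (l + 1).
      by apply/eqP; rewrite -subr_eq0 (oppF hF2) addrC h.
    have : ftrace c0 = 0.
      rewrite hc; apply: fix_tr; rewrite -exprM -hl mulnDl mul1n exprD.
      rewrite (_ : (l * l)%N = #|F|); last by rewrite hF mulnn.
      by rewrite expf_card -exprS addn1.
    by rewrite hc0 => /eqP; rewrite oner_eq0.
  apply/orP; right; rewrite /quad !hornerE; apply/eqP => h.
  have hc : c0 = a ^+ 2 + a.
    by apply/eqP; rewrite -subr_eq0 (oppF hF2) addrC h.
  have := ftrace_sqadd hs0 hF2 a; rewrite -hc hc0 => /eqP; rewrite oner_eq0.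
  by [].
pose w (a : F) := R.[a] ^+ (2 ^ (2 * s).-1).
have hw2 : forall a, w a ^+ 2 = R.[a].
  move=> a; rewrite /w -exprM -expnSr prednK; last by lia.
  by rewrite -hF2 expf_card.
have hwnz : forall a, w a != 0 by move=> a; rewrite expf_neq0.
have hm : (0 < m)%N by rewrite /m; lia.
have hll : (3 * l <= l ^ 2)%N by rewrite -mulnn leq_mul2r; lia.
have hmq : (m <= l ^ 2)%N by rewrite /m; lia.
have hGG := GGT hq0 hF hm hmq Rmon hRsize hw2.
have hfr := Gm_free hF hm hmq Rmon hRsize hwnz.
have hds := Gm_dist hF hm hmq Rmon hRsize hwnz.
rewrite addn1; exists (Q (Gm (l ^ 2) m w)); split; [split|].
- rewrite (dimQ hGG hfr); congr (_ ^ _)%N; rewrite /m; lia.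
- have h := Q_KL hGG hds (sgD hs0 hF2) (sg0 hs0 hF2) (sgc0 hs0 hF2).
  move: h; have -> : m.+1 = l by rewrite /m; lia.
  by [].
- lia.
Qed.

Local Close Scope ring_scope.

Theorem mainTheorem5 (s l : nat) (F : finFieldType) :
  l = (2 ^ s)%N -> (2 < l)%N -> #|F| = (l ^ 2)%N ->
  exists Q : {vspace qstate F (l ^ 2 + 1)},
    is_qMDS Q (l ^ 2 + 3 - 2 * l) l.
Proof. exact: main_aux. Qed.
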